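(* Let $G$ be a connected graph of order $n\ge2$ with maximum degree $\Delta(G)$. Then $\operatorname{ZIR}(G)\le\frac{\Delta(G)}{\Delta(G)+1}\,n$, and this bound is sharp.
   Context: A nonempty $F\subseteq V(G)$ is a fort if every $v\notin F$ has $|N(v)\cap F|\ne1$. A private fort of $x\in S$ relative to $S$ is a fort $F$ with $S\cap F=\{x\}$; $S$ is a ZIr-set if every element of $S$ has a private fort. $\operatorname{ZIR}(G)$ is the maximum cardinality of an inclusion-maximal ZIr-set. *)

(* Defs.v *)
(* A simple graph on a finite vertex type T is a symmetric,
   irreflexive boolean relation e : rel T. *)
From mathcomp Require Import all_boot.
Set Implicit Arguments. Unset Strict Implicit. Unset Printing Implicit Defensive.

Section ZIR.
Variables (T : finType) (e : rel T).

Definition nbhd (v : T) : {set T} := [set u | e v u].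

Definition maxdeg : nat := \max_(v : T) #|nbhd v|.

Definition connectedb : bool := [forall x, forall y, connect e x y].

Definition fort (F : {set T}) : bool :=
  (F != set0) && [forall v, (v \notin F) ==> (#|nbhd v :&: F| != 1)].

Definition private_fort (S : {set T}) (x : T) (F : {set T}) : bool :=
  fort F && (S :&: F == [set x]).

Definition ZIr_set (S : {set T}) : bool :=
  [forall x in S, exists F : {set T}, private_fort S x F].

Definition maximal_ZIr_set (S : {set T}) : bool :=
  ZIr_set S && [forall S' : {set T}, (S \proper S') ==> ~~ ZIr_set S'].

Definition ZIR : nat := \max_(S : {set T} | maximal_ZIr_set S) #|S|.

End ZIR.

(* Main.v *)
Require Import Defs.
From mathcomp Require Import all_boot.
From mathcomp Require Import zify.
Set Implicit Arguments. Unset Strict Implicit. Unset Printing Implicit Defensive.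

Section Bound.
Variables (T : finType) (e : rel T).
Hypothesis esym : symmetric e.
Hypothesis eirr : irreflexive e.
Hypothesis hnb : forall x : T, exists y, e x y.

Lemma out_nb S x : ZIr_set e S -> x \in S -> exists y, e x y && (y \notin S).
Proof.
move=> /forall_inP hZ xS.
case: (hnb x) => v exv.
case: (boolP [exists y, e x y && (y \notin S)]) => [/existsP//|/existsPn hall].
have allS : forall w, e x w -> w \in S.
  by move=> w xw; move: (hall w); rewrite xw /= negbK.
have vS := allS v exv.
case/existsP: (hZ v vS) => F /andP[/andP[_ /forallP hF] /eqP hSF].
have vF : v \in F.
  have : v \in S :&: F by rewrite hSF set11.
  by rewrite inE => /andP[].
have xF : x \notin F.
  apply/negP => xF.
  have : x \in S :&: F by rewrite inE xS xF.
  rewrite hSF inE => /eqP xv; by rewrite xv eirr in exv.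
have := hF x; rewrite xF /= => /eqP H; exfalso; apply: H.
suff -> : nbhd e x :&: F = [set v] by rewrite cards1.
apply/setP => w.
rewrite !inE; apply/andP/eqP => [[xw wF]|->]; last by [].
have : w \in S :&: F by rewrite inE (allS _ xw) wF.
by rewrite hSF inE => /eqP.
Qed.

Lemma zir_bound S : ZIr_set e S -> #|S| * (maxdeg e).+1 <= maxdeg e * #|T|.
Proof.
move=> hZ.
have h1 : #|S| <= \sum_(y in ~: S) \sum_(x in S) (e y x : nat).
  rewrite exchange_big /= -sum1_card leq_sum // => x xS.
  case: (out_nb hZ xS) => y /andP[xy yS].
  rewrite (bigD1 y) ?inE //= esym xy; exact: leq_addr.
have h2 : \sum_(y in ~: S) \sum_(x in S) (e y x : nat) <= #|~: S| * maxdeg e.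
  rewrite -sum_nat_const leq_sum // => y _.
  apply: leq_trans (_ : #|nbhd e y| <= _); last first.
    by rewrite /maxdeg (bigD1 y) //= leq_maxl.
  apply: (@leq_trans (\sum_x (e y x : nat))).
    by rewrite [X in _ <= X](bigID (mem S)) /= leq_addr.
  rewrite -sum1_card; apply: eq_leq; rewrite [RHS]big_mkcond /=; apply: eq_bigr => x _.
  by rewrite inE.
have hc := cardsC S.
nia.
Qed.

Lemma zir_max : ZIR e * (maxdeg e).+1 <= maxdeg e * #|T|.
Proof.
rewrite /ZIR; elim/big_ind: _ => //.
  by move=> a b ha hb; rewrite /maxn; case: ifP.
by move=> S /andP[hZ _]; exact: zir_bound.
Qed.
End Bound.

Lemma has_nb (T : finType) (e : rel T) :
  connectedb e -> 2 <= #|T| -> forall x : T, exists y, e x y.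
Proof.
move=> /forallP hc hT x.
have : 0 < #|[set~ x]| by rewrite cardsC1; case: #|T| hT => [|[|n]].
case/card_gt0P => y; rewrite !inE => yx.
have := (forallP (hc x)) y; case/connectP => [[|z p]] /=.
  by move=> _ yx'; rewrite yx' eqxx in yx.
by case/andP => xz _ _; exists z.
Qed.

Section Complete.
Variable D : nat.
Hypothesis D1 : 1 <= D.
Definition KT := 'I_D.+1.
Definition Ke : rel KT := fun x y => x != y.

Lemma Ksym : symmetric Ke. Proof. by move=> x y; rewrite /Ke eq_sym. Qed.
Lemma Kirr : irreflexive Ke. Proof. by move=> x; rewrite /Ke eqxx. Qed.
Lemma Kconn : connectedb Ke.
Proof.
apply/forallP => x; apply/forallP => y.
case: (eqVneq x y) => [->|xy]; first exact: connect0.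
by apply: connect1.
Qed.
Lemma Kcard : #|KT| = D.+1. Proof. by rewrite card_ord. Qed.
Lemma Knb x : nbhd Ke x = [set~ x].
Proof. by apply/setP => y; rewrite !inE /Ke eq_sym. Qed.
Lemma Kmaxdeg : maxdeg Ke = D.
Proof.
have hc : forall x, #|nbhd Ke x| = D by move=> x; rewrite Knb cardsC1 Kcard.
apply/eqP; rewrite eqn_leq; apply/andP; split.
  by apply/bigmax_leqP => i _; rewrite hc.
rewrite /maxdeg; apply: leq_trans (leq_bigmax ord0); by rewrite hc.
Qed.
Lemma Knb' : forall x : KT, exists y, Ke x y.
Proof. by apply: has_nb Kconn _; rewrite Kcard. Qed.

Lemma KZIR : ZIR Ke = D.
Proof.
have hb := zir_bound Ksym Kirr Knb'.
rewrite Kmaxdeg Kcard in hb.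
apply/eqP; rewrite eqn_leq; apply/andP; split.
  have := zir_max Ksym Kirr Knb'; rewrite Kmaxdeg Kcard.
  by rewrite leq_pmul2r.
set S := [set~ (ord0 : KT)].
have cS : #|S| = D by rewrite cardsC1 Kcard.
apply: (@leq_trans #|S|); first by rewrite cS.
rewrite /ZIR; apply: (leq_bigmax_cond (F := fun S0 : {set KT} => #|S0|)).
apply/andP; split.
  apply/forall_inP => x; rewrite !inE => x0.
  apply/existsP; exists [set x; ord0]; apply/andP; split.
    apply/andP; split.
      by apply/set0Pn; exists x; rewrite !inE eqxx.
    apply/forallP => v; apply/implyP; rewrite !inE negb_or => /andP[vx v0].
    suff -> : nbhd Ke v :&: [set x; ord0] = [set x; ord0] by rewrite cards2 x0.
    apply/setP => w; rewrite !inE /Ke.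
    by apply/andb_idl => /orP[]/eqP->.
  apply/eqP/setP => w; rewrite !inE.
  by case: (eqVneq w x) => [->|_]; [rewrite x0 | case: (w == ord0)].
apply/forallP => S'; apply/implyP => pS; apply/negP => hZ.
have := hb _ hZ; rewrite leq_pmul2r // => h.
by have := proper_card pS; rewrite cS ltnNge h.
Qed.
End Complete.

Theorem proposition4p10 :
  (forall (T : finType) (e : rel T),
      symmetric e -> irreflexive e -> connectedb e -> 2 <= #|T| ->
      ZIR e * (maxdeg e).+1 <= maxdeg e * #|T|)
  /\
  (forall D : nat, 1 <= D ->
      exists (T : finType) (e : rel T),
        symmetric e /\ irreflexive e /\ connectedb e /\ 2 <= #|T| /\
        maxdeg e = D /\ ZIR e * D.+1 = D * #|T|).
Proof.
split.
  move=> T e hs hi hc hT; exact: zir_max hs hi (has_nb hc hT).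
move=> D D1; exists (KT D), (@Ke D).
split; first exact: Ksym.
split; first exact: Kirr.
split; first exact: Kconn.
split; first by rewrite card_ord.
split; first exact: Kmaxdeg.
rewrite KZIR //; congr (_ * _); symmetry; exact: Kcard.
Qed.
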